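(* Let $P,K\in\mathcal K^d$ with $P\subset K$ and let $x,y\in K\setminus P$. Write $P^x:=\operatorname{conv}(P\cup\{x\})$, $P^y:=\operatorname{conv}(P\cup\{y\})$, $P^{xy}:=\operatorname{conv}(P\cup\{x,y\})$, and for $w\in K\setminus P$ let $\mathcal V_w(P):=\{z\in K\setminus P:[z,w]\cap P=\emptyset\}$. If $\mathcal V_x(P)\cap\mathcal V_y(P)=\emptyset$, then $$P^x\cap P^y=P,\qquad P^x\cup P^y=P^{xy},$$ and for every valuation $\psi:\mathcal K^d\to\mathbb R$, $$\psi(P^{xy})-\psi(P^x)-\psi(P^y)+\psi(P)=0.$$
   Context: $\mathcal K^d$ is the set of compact convex subsets of $\mathbb R^d$; $[z,w]$ denotes the closed line segment between $z$ and $w$. A valuation is a map $\psi:\mathcal K^d\to\mathbb R$ with $\psi(A)+\psi(B)=\psi(A\cup B)+\psi(A\cap B)$ whenever $A,B,A\cup B\in\mathcal K^d$. *)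

(* Defs.v *)
From Stdlib Require Import Reals Lra List.
Import ListNotations.
Open Scope R_scope.

Definition pt (d : nat) : Type := {i : nat | (i < d)%nat} -> R.

Definition pset (d : nat) : Type := pt d -> Prop.

Definition coord {d : nat} (v : pt d) (i : nat) : R :=
  match Compare_dec.lt_dec i d with
  | left h => v (exist _ i h)
  | right _ => 0
  end.

Definition padd {d : nat} (v w : pt d) : pt d := fun i => v i + w i.
Definition pscale {d : nat} (t : R) (v : pt d) : pt d := fun i => t * v i.

Definition dist {d : nat} (v w : pt d) : R :=
  sqrt (fold_right Rplus 0
          (map (fun i => (coord v i - coord w i) ^ 2) (seq 0 d))).

Definition is_closed {d : nat} (A : pset d) : Prop :=
  forall z, ~ A z -> exists eps, 0 < eps /\ forall w, dist z w < eps -> ~ A w.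

Definition is_bounded {d : nat} (A : pset d) : Prop :=
  exists M, forall z w, A z -> A w -> dist z w <= M.

(* Compact = closed and bounded (Heine-Borel in R^d). *)
Definition is_compact {d : nat} (A : pset d) : Prop := is_closed A /\ is_bounded A.

Definition segment {d : nat} (z w : pt d) : pset d :=
  fun u => exists t, 0 <= t <= 1 /\ u = padd (pscale (1 - t) z) (pscale t w).

Definition is_convex {d : nat} (A : pset d) : Prop :=
  forall z w, A z -> A w -> forall u, segment z w u -> A u.

(* K^d: compact convex subsets (the empty set included). *)
Definition convex_body {d : nat} (A : pset d) : Prop := is_compact A /\ is_convex A.

Definition conv {d : nat} (S : pset d) : pset d :=
  fun u => forall C : pset d, is_convex C -> (forall w, S w -> C w) -> C u.

Definition setU {d : nat} (A B : pset d) : pset d := fun u => A u \/ B u.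
Definition setI {d : nat} (A B : pset d) : pset d := fun u => A u /\ B u.
Definition set1 {d : nat} (x : pt d) : pset d := fun u => u = x.

Definition Vis {d : nat} (K P : pset d) (w : pt d) : pset d :=
  fun z => K z /\ ~ P z /\ (forall u, segment z w u -> ~ P u).

(* valuation on K^d (psi given on all sets, only values on K^d matter) *)
Definition valuation {d : nat} (psi : pset d -> R) : Prop :=
  forall A B : pset d, convex_body A -> convex_body B -> convex_body (setU A B) ->
    psi A + psi B = psi (setU A B) + psi (setI A B).

(* Main.v *)
Require Import Defs.
From Stdlib Require Import Reals Lra Lia List Classical ClassicalEpsilon FunctionalExtensionality PropExtensionality ProofIrrelevance ZArith.
From Stdlib Require Rtopology.
Import Defs.
Import ListNotations.
Open Scope R_scope.

Lemma coord_lt {d} (v : pt d) (j : {i | (i < d)%nat}) : coord v (proj1_sig j) = v j.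
Proof.
  destruct j as [i h]; unfold coord; simpl.
  destruct (Compare_dec.lt_dec i d) as [h'|h']; [|lia].
  rewrite (proof_irrelevance _ h' h); reflexivity.
Qed.

Lemma fold_nonneg (f : nat -> R) l : (forall k, 0 <= f k) -> 0 <= fold_right Rplus 0 (map f l).
Proof. intros H; induction l; simpl; [lra|]. specialize (H a); lra. Qed.

Lemma sum_le_term (f : nat -> R) l i : (forall k, 0 <= f k) -> In i l -> f i <= fold_right Rplus 0 (map f l).
Proof.
  intros H; induction l; simpl; [tauto|]. intros [->|Hi].
  - pose proof (fold_nonneg f l H); lra.
  - specialize (IHl Hi); specialize (H a); lra.
Qed.

Lemma fold_le (f : nat -> R) l e : (forall k, f k <= e) -> fold_right Rplus 0 (map f l) <= INR (length l) * e.
Proof.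
  intros H; induction l; cbn [fold_right map length]; [simpl; lra|]. rewrite S_INR. specialize (H a). lra.
Qed.

Lemma coord_le_dist {d} (v w : pt d) i : Rabs (coord v i - coord w i) <= dist v w.
Proof.
  unfold dist. destruct (Compare_dec.lt_dec i d) as [h|h].
  - rewrite <- sqrt_Rsqr_abs. apply sqrt_le_1_alt.
    set (f := fun i => (coord v i - coord w i) ^ 2).
    replace (Rsqr (coord v i - coord w i)) with (f i) by (unfold f, Rsqr; ring).
    apply sum_le_term. intros k; unfold f. apply pow2_ge_0.
    apply in_seq; lia.
  - unfold coord at 1 2. destruct (Compare_dec.lt_dec i d); [lia|].
    replace (0-0) with 0 by ring. rewrite Rabs_R0. apply sqrt_pos.
Qed.

Lemma abs_le_dist {d} (v w : pt d) j : Rabs (v j - w j) <= dist v w.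
Proof. rewrite <- !coord_lt. apply coord_le_dist. Qed.

Lemma dist_le {d} (v w : pt d) e : 0 <= e -> (forall j, Rabs (v j - w j) <= e) ->
  dist v w <= sqrt (INR d * e ^ 2).
Proof.
  intros He H. unfold dist. apply sqrt_le_1_alt.
  rewrite <- (length_seq d 0) at 2. apply fold_le. intros k.
  rewrite <- pow2_abs. apply pow_incr. split; [apply Rabs_pos|].
  unfold coord. destruct (Compare_dec.lt_dec k d) as [h|h].
  - apply (H (exist _ k h)).
  - replace (0-0) with 0 by ring. rewrite Rabs_R0; exact He.
Qed.

Lemma dist_small {d} (v w : pt d) eps : 0 < eps ->
  (forall j, Rabs (v j - w j) <= eps / (INR d + 1)) -> dist v w < eps.
Proof.
  intros He H. pose proof (pos_INR d) as Hd.
  set (c := eps / (INR d + 1)).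
  assert (Hc : 0 < c) by (unfold c; apply Rdiv_lt_0_compat; lra).
  assert (Hec : eps = c * (INR d + 1)) by (unfold c; field; lra).
  eapply Rle_lt_trans. apply (dist_le v w c); [lra|exact H].
  rewrite <- (sqrt_pow2 eps) by lra. apply sqrt_lt_1_alt. split.
  - apply Rmult_le_pos; [lra| apply pow2_ge_0].
  - rewrite Hec. simpl. nra.
Qed.

Definition Sx {d} (P : pset d) (x : pt d) : pset d :=
  fun u => exists q s, P q /\ 0 <= s <= 1 /\ forall j, u j = (1 - s) * q j + s * x j.

Lemma seg_pt {d} (z w u : pt d) : segment z w u ->
  exists t, 0 <= t <= 1 /\ forall j, u j = (1 - t) * z j + t * w j.
Proof. intros [t [Ht ->]]. exists t; split; auto. Qed.

Lemma pt_seg {d} (z w u : pt d) t : 0 <= t <= 1 -> (forall j, u j = (1 - t) * z j + t * w j) ->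
  segment z w u.
Proof.
  intros Ht H. exists t; split; auto. apply functional_extensionality; intro j.
  rewrite H; reflexivity.
Qed.

Lemma pt_eq {d} (u v : pt d) : (forall j, u j = v j) -> u = v.
Proof. intros; apply functional_extensionality; auto. Qed.

Lemma comb {d} (P : pset d) q q' a b : is_convex P -> P q -> P q' -> 0 <= a -> 0 <= b ->
  exists q'', P q'' /\ forall j, a * q j + b * q' j = (a + b) * q'' j.
Proof.
  intros HP Hq Hq' Ha Hb. destruct (Req_dec (a + b) 0) as [H0|H0].
  - exists q; split; auto. intros j. replace a with 0 by lra. replace b with 0 by lra. ring.
  - exists (padd (pscale (1 - b / (a + b)) q) (pscale (b / (a + b)) q')). split.
    + apply (HP q q' Hq Hq'). exists (b / (a + b)). split; [|reflexivity].
      assert (Hab : 0 < a + b) by lra.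
      assert (b / (a + b) = 1 - a / (a + b)) by (field; lra).
      assert (0 <= a / (a + b)) by (apply Rmult_le_pos; [lra| left; apply Rinv_0_lt_compat; lra]).
      assert (0 <= b / (a + b)) by (apply Rmult_le_pos; [lra| left; apply Rinv_0_lt_compat; lra]).
      lra.
    + intros j. unfold padd, pscale. field. exact H0.
Qed.

Lemma conv_convex {d} (S : pset d) : is_convex (conv S).
Proof. intros z w Hz Hw u Hu C HC HS. exact (HC z w (Hz C HC HS) (Hw C HC HS) u Hu). Qed.

Lemma conv_incl {d} (S : pset d) u : S u -> conv S u.
Proof. intros H C HC HS; auto. Qed.

Lemma conv_mono {d} (A B : pset d) u : (forall w, A w -> B w) -> conv A u -> conv B u.
Proof. intros H Hu C HC HS. apply Hu; auto. Qed.

Lemma Sx_convex {d} (P : pset d) x : is_convex P -> is_convex (Sx P x).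
Proof.
  intros HP z w [q1 [s1 [Hq1 [Hs1 Hz]]]] [q2 [s2 [Hq2 [Hs2 Hw]]]] u Hu.
  destruct (seg_pt _ _ _ Hu) as [t [Ht Hut]].
  destruct (comb P q1 q2 ((1 - t) * (1 - s1)) (t * (1 - s2)) HP Hq1 Hq2) as [q [Hq Hc]];
    [nra|nra|].
  exists q, ((1 - t) * s1 + t * s2). split; [auto|split; [nra|]].
  intros j. rewrite Hut, Hz, Hw.
  replace (1 - ((1 - t) * s1 + t * s2)) with ((1 - t) * (1 - s1) + t * (1 - s2)) by ring.
  rewrite <- Hc. ring.
Qed.

Lemma Sx_sub {d} (P C : pset d) x : is_convex C -> (forall z, P z -> C z) -> C x ->
  forall u, Sx P x u -> C u.
Proof.
  intros HC HPC Hx u [q [s [Hq [Hs Hu]]]]. apply (HC q x); auto.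
  apply (pt_seg _ _ _ s); auto.
Qed.

Lemma Sx_conv {d} (P : pset d) x p0 : is_convex P -> P p0 ->
  forall u, conv (setU P (set1 x)) u <-> Sx P x u.
Proof.
  intros HP Hp0 u; split.
  - intros Hu. apply Hu; [apply Sx_convex; auto|].
    intros w [Hw|Hw].
    + exists w, 0. split; [auto|split; [lra|]]. intros; ring.
    + exists p0, 1. split; [auto|split; [lra|]]. intros; rewrite Hw; ring.
  - apply Sx_sub; [apply conv_convex| |].
    + intros; apply conv_incl; left; auto.
    + apply conv_incl; right; reflexivity.
Qed.

Lemma Sx_vis {d} (K P : pset d) x z : is_convex P -> is_convex K -> (forall z, P z -> K z) ->
  K x -> Sx P x z -> ~ P z -> Vis K P x z.
Proof.
  intros HP HK HPK Hx Hz Hnz. split; [exact (Sx_sub P K x HK HPK Hx z Hz)|split; auto].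
  destruct Hz as [q [s [Hq [Hs Hz]]]].
  intros u Hu HPu. destruct (seg_pt _ _ _ Hu) as [t [Ht Hut]].
  set (sig := 1 - (1 - t) * (1 - s)).
  destruct (Req_dec sig 0) as [H0|H0].
  - assert (s = 0) by (unfold sig in H0; nra).
    apply Hnz. replace z with q; auto. apply pt_eq; intros j; rewrite Hz; subst s; ring.
  - apply Hnz. apply (HP q u Hq HPu). apply (pt_seg _ _ _ (s / sig)).
    + assert (Hsg0 : 0 <= sig) by (unfold sig; nra).
      assert (Hsg : 0 < sig) by (destruct Hsg0 as [?|E]; [auto|exfalso; apply H0; auto]).
      assert (s <= sig) by (unfold sig; nra).
      split; [apply Rmult_le_pos; [lra| left; apply Rinv_0_lt_compat; lra]|].
      apply (Rmult_le_reg_r sig); [lra|]. unfold Rdiv. rewrite Rmult_assoc, Rinv_l by lra. lra.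
    + intros j. rewrite Hut, Hz. unfold sig in *. field. exact H0.
Qed.

Lemma side {d} (P : pset d) x y p tau q A g dl u : is_convex P -> P p -> P q ->
  (forall j, p j = (1 - tau) * x j + tau * y j) -> 0 < tau ->
  0 <= A -> 0 <= g -> 0 <= dl -> A + g + dl = 1 -> dl * (1 - tau) <= g * tau ->
  (forall j, u j = A * q j + g * x j + dl * y j) -> Sx P x u.
Proof.
  intros HP Hp Hq Hpj Ht HA Hg Hd Hsum Hc Hu.
  set (mu := dl / tau). set (s := g - dl * (1 - tau) / tau).
  assert (Hmu : 0 <= mu) by (unfold mu; apply Rmult_le_pos; [lra| left; apply Rinv_0_lt_compat; lra]).
  assert (Hs0 : 0 <= s).
  { unfold s. assert (dl * (1 - tau) / tau <= g); [|lra].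
    apply (Rmult_le_reg_r tau); [lra|]. unfold Rdiv. rewrite Rmult_assoc, Rinv_l by lra. lra. }
  destruct (comb P q p A mu HP Hq Hp HA Hmu) as [q' [Hq' Hc']].
  exists q', s. split; auto.
  assert (Hs1 : A + mu = 1 - s) by (unfold mu, s; replace A with (1 - g - dl) by lra; field; lra).
  split; [lra|]. intros j. rewrite <- Hs1, <- Hc', Hu, Hpj. unfold mu, s. field. lra.
Qed.

Lemma three {d} (P : pset d) x y p tau q A g dl u : is_convex P -> P p -> P q ->
  (forall j, p j = (1 - tau) * x j + tau * y j) -> 0 < tau < 1 ->
  0 <= A -> 0 <= g -> 0 <= dl -> A + g + dl = 1 ->
  (forall j, u j = A * q j + g * x j + dl * y j) -> Sx P x u \/ Sx P y u.
Proof.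
  intros HP Hp Hq Hpj Ht HA Hg Hd Hsum Hu.
  destruct (Rle_lt_dec (dl * (1 - tau)) (g * tau)) as [Hc|Hc].
  - left. eapply (side P x y p tau q A g dl u); eauto; lra.
  - right. apply (side P y x p (1 - tau) q A dl g u); auto; try lra.
    + intros j; rewrite Hpj; ring.
    + intros j; rewrite Hu; ring.
Qed.

Lemma mixed {d} (P : pset d) x y p tau z w t u : is_convex P -> P p ->
  (forall j, p j = (1 - tau) * x j + tau * y j) -> 0 < tau < 1 ->
  Sx P x z -> Sx P y w -> 0 <= t <= 1 -> (forall j, u j = (1 - t) * z j + t * w j) ->
  Sx P x u \/ Sx P y u.
Proof.
  intros HP Hp Hpj Ht [q1 [s1 [Hq1 [Hs1 Hz]]]] [q2 [s2 [Hq2 [Hs2 Hw]]]] Htt Hu.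
  destruct (comb P q1 q2 ((1 - t) * (1 - s1)) (t * (1 - s2)) HP Hq1 Hq2) as [q [Hq Hc]];
    [nra|nra|].
  apply (three P x y p tau q ((1 - t) * (1 - s1) + t * (1 - s2)) ((1 - t) * s1) (t * s2) u);
    auto; try nra.
  intros j. rewrite Hu, Hz, Hw, <- Hc. ring.
Qed.

Lemma union_convex {d} (P : pset d) x y p tau : is_convex P -> P p ->
  (forall j, p j = (1 - tau) * x j + tau * y j) -> 0 < tau < 1 ->
  is_convex (fun u => Sx P x u \/ Sx P y u).
Proof.
  intros HP Hp Hpj Ht z w Hz Hw u Hu.
  destruct (seg_pt _ _ _ Hu) as [t [Htt Hut]].
  destruct Hz as [Hz|Hz]; destruct Hw as [Hw|Hw].
  - left. exact (Sx_convex P x HP z w Hz Hw u Hu).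
  - exact (mixed P x y p tau z w t u HP Hp Hpj Ht Hz Hw Htt Hut).
  - apply (mixed P x y p tau w z (1 - t) u HP Hp Hpj Ht Hw Hz); [lra|].
    intros j; rewrite Hut; ring.
  - right. exact (Sx_convex P y HP z w Hz Hw u Hu).
Qed.

Lemma abs_small_zero a : (forall e, 0 < e -> Rabs a <= e) -> a = 0.
Proof.
  intros H. destruct (Req_dec a 0) as [|Hn]; auto. exfalso.
  assert (0 < Rabs a) by (apply Rabs_pos_lt; auto).
  specialize (H (Rabs a / 2)). lra.
Qed.

Lemma Sx_closed {d} (P : pset d) x p0 : is_closed P -> is_bounded P -> P p0 ->
  is_closed (Sx P x).
Proof.
  intros HPc [M HM] Hp0 z Hz. apply NNPP; intro Hn.
  assert (Happ : forall n : nat, exists sq : R * pt d, 0 <= fst sq <= 1 /\ P (snd sq) /\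
     forall j, Rabs (z j - (1 - fst sq) * snd sq j - fst sq * x j) <= / (INR n + 1)).
  { intro n. assert (Hpos : 0 < / (INR n + 1)) by (apply Rinv_0_lt_compat; pose proof (pos_INR n); lra).
    apply NNPP; intro H'. apply Hn. exists (/ (INR n + 1)). split; auto.
    intros w Hw [q [s [Hq [Hs Hwj]]]]. apply H'. exists (s, q). simpl. split; auto. split; auto.
    intros j. pose proof (abs_le_dist z w j). rewrite Hwj in H.
    replace (z j - (1 - s) * q j - s * x j) with (z j - ((1 - s) * q j + s * x j)) by ring. lra. }
  set (f := fun n => proj1_sig (constructive_indefinite_description _ (Happ n))).
  assert (Hf : forall n, 0 <= fst (f n) <= 1 /\ P (snd (f n)) /\
     forall j, Rabs (z j - (1 - fst (f n)) * snd (f n) j - fst (f n) * x j) <= / (INR n + 1)).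
  { intro n. unfold f. destruct (constructive_indefinite_description _ (Happ n)); simpl; auto. }
  set (sn := fun n => fst (f n)).
  destruct (Rtopology.Bolzano_Weierstrass sn (fun c => 0 <= c <= 1) (Rtopology.compact_P3 0 1))
    as [l Hl]; [intro n; apply (Hf n)|].
  assert (Hval : forall del, 0 < del -> forall N, exists n, (N <= n)%nat /\ Rabs (sn n - l) < del).
  { intros del Hdel N. destruct (Hl (Rtopology.disc l (mkposreal del Hdel)) N) as [n [HN Hn']].
    - exists (mkposreal del Hdel). intros y Hy; exact Hy.
    - exists n; split; auto. }
  assert (Hl0 : 0 <= l).
  { destruct (Rle_lt_dec 0 l) as [|Hlt]; auto. destruct (Hval (- l) ltac:(lra) 0%nat) as [n [_ Hn']].
    destruct (Hf n) as [Hs _]. unfold sn in Hn'. apply Rabs_def2 in Hn'. lra. }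
  assert (Hl1 : l <= 1).
  { destruct (Rle_lt_dec l 1) as [|Hlt]; auto. destruct (Hval (l - 1) ltac:(lra) 0%nat) as [n [_ Hn']].
    destruct (Hf n) as [Hs _]. unfold sn in Hn'. apply Rabs_def2 in Hn'. lra. }
  set (C := M + dist p0 x).
  assert (HC : forall q j, P q -> Rabs (q j - x j) <= C).
  { intros q j Hq. unfold C.
    replace (q j - x j) with ((q j - p0 j) + (p0 j - x j)) by ring.
    eapply Rle_trans; [apply Rabs_triang|].
    pose proof (abs_le_dist q p0 j). pose proof (abs_le_dist p0 x j). pose proof (HM q p0 Hq Hp0). lra. }
  assert (HC0 : 0 <= C) by (unfold C; pose proof (HM p0 p0 Hp0 Hp0); assert (0 <= dist p0 p0) by apply sqrt_pos; assert (0 <= dist p0 x) by apply sqrt_pos; lra).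
  assert (HE : forall e, 0 < e -> exists q, P q /\ forall j, Rabs (z j - l * x j - (1 - l) * q j) <= e).
  { intros e He.
    destruct (archimed (2 / e)) as [Har _].
    set (N := Z.to_nat (up (2 / e))).
    assert (HN : 2 / e < INR N + 1).
    { unfold N. rewrite INR_IZR_INZ. assert (Hle : (up (2 / e) <= Z.of_nat (Z.to_nat (up (2 / e))))%Z) by lia.
      apply IZR_le in Hle. lra. }
    set (del := e / (2 * (C + 1))).
    assert (Hdel : 0 < del) by (unfold del; apply Rdiv_lt_0_compat; lra).
    destruct (Hval del Hdel N) as [n [HNn Hn']].
    destruct (Hf n) as [Hs [Hq Hj]].
    exists (snd (f n)). split; auto. intros j.
    set (s := fst (f n)) in *. set (q := snd (f n)) in *.
    replace (z j - l * x j - (1 - l) * q j) with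
      ((z j - (1 - s) * q j - s * x j) + (s - l) * (x j - q j)) by ring.
    eapply Rle_trans; [apply Rabs_triang|]. rewrite Rabs_mult.
    assert (H1 : / (INR n + 1) <= e / 2).
    { apply Rle_trans with (/ (INR N + 1)).
      - apply Rinv_le_contravar. pose proof (pos_INR N); lra. apply le_INR in HNn. lra.
      - assert (0 < INR N + 1) by (pose proof (pos_INR N); lra).
        replace (e / 2) with (/ (2 / e)) by (field; lra).
        apply Rinv_le_contravar; [apply Rdiv_lt_0_compat; lra | lra]. }
    assert (H2 : Rabs (s - l) * Rabs (x j - q j) <= del * C).
    { apply Rmult_le_compat; try apply Rabs_pos. unfold sn in Hn'. fold s in Hn'. lra.
      rewrite Rabs_minus_sym. apply HC; auto. }
    assert (H3 : del * C <= e / 2).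
    { unfold del. apply (Rmult_le_reg_r (2 * (C + 1))); [lra|].
      replace (e / (2 * (C + 1)) * C * (2 * (C + 1))) with (e * C) by (field; lra).
      nra. }
    specialize (Hj j). lra. }
  destruct (Rle_lt_dec 1 l) as [Hl1'|Hl1'].
  - assert (l = 1) by lra. subst l. apply Hz. exists p0, 1. split; auto. split; [lra|].
    intros j. apply Rminus_diag_uniq. apply abs_small_zero. intros e He.
    destruct (HE e He) as [q [_ Hq]]. specialize (Hq j).
    replace (z j - ((1 - 1) * p0 j + 1 * x j)) with (z j - 1 * x j - (1 - 1) * q j) by ring. exact Hq.
  - set (r := fun j => (z j - l * x j) / (1 - l)).
    assert (Hr : P r).
    { apply NNPP; intro Hnr. destruct (HPc r Hnr) as [eps [Heps Hb]].
      pose proof (pos_INR d).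
      destruct (HE ((1 - l) * (eps / (INR d + 1)))) as [q [Hq Hqj]].
      { apply Rmult_lt_0_compat; [lra| apply Rdiv_lt_0_compat; lra]. }
      apply (Hb q); auto. apply dist_small; auto. intros j.
      replace (r j - q j) with ((z j - l * x j - (1 - l) * q j) / (1 - l)) by (unfold r; field; lra).
      unfold Rdiv at 1. rewrite Rabs_mult, Rabs_inv, (Rabs_right (1 - l)) by lra.
      apply (Rmult_le_reg_r (1 - l)); [lra|]. rewrite Rmult_assoc, Rinv_l, Rmult_1_r by lra.
      specialize (Hqj j). lra. }
    apply Hz. exists r, l. split; auto. split; [lra|]. intros j. unfold r. field. lra.
Qed.

Lemma closed_ext {d} (A B : pset d) : (forall u, A u <-> B u) -> is_closed A -> is_closed B.
Proof.
  intros H HA z Hz. destruct (HA z) as [e [He Hb]]; [rewrite H; auto|].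
  exists e; split; auto. intros w Hw HBw. apply (Hb w Hw). apply H; auto.
Qed.

Lemma closed_union {d} (A B : pset d) : is_closed A -> is_closed B -> is_closed (setU A B).
Proof.
  intros HA HB z Hz. destruct (HA z) as [e1 [He1 Hb1]]; [intro; apply Hz; left; auto|].
  destruct (HB z) as [e2 [He2 Hb2]]; [intro; apply Hz; right; auto|].
  exists (Rmin e1 e2). split; [apply Rmin_pos; auto|].
  intros w Hw [Hw'|Hw'].
  - apply (Hb1 w); auto. pose proof (Rmin_l e1 e2); lra.
  - apply (Hb2 w); auto. pose proof (Rmin_r e1 e2); lra.
Qed.

Lemma bounded_sub {d} (A K : pset d) : (forall u, A u -> K u) -> is_bounded K -> is_bounded A.
Proof. intros H [M HM]. exists M. intros; auto. Qed.

Lemma set_ext {d} (A B : pset d) : (forall u, A u <-> B u) -> A = B.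
Proof. intros H. apply functional_extensionality; intro u. apply propositional_extensionality; auto. Qed.

Theorem lemma4p3 (d : nat) (P K : pset d) (x y : pt d) :
  convex_body P -> convex_body K -> (forall z, P z -> K z) ->
  K x -> ~ P x -> K y -> ~ P y ->
  (forall z, ~ (Vis K P x z /\ Vis K P y z)) ->
  (forall z, setI (conv (setU P (set1 x))) (conv (setU P (set1 y))) z <-> P z) /\
  (forall z, setU (conv (setU P (set1 x))) (conv (setU P (set1 y))) z <->
             conv (setU P (setU (set1 x) (set1 y))) z) /\
  (forall psi : pset d -> R, valuation psi ->
     psi (conv (setU P (setU (set1 x) (set1 y))))
     - psi (conv (setU P (set1 x))) - psi (conv (setU P (set1 y)))
     + psi P = 0).
Proof.
  intros [[HPc HPb] HP] [[HKc HKb] HK] HPK Kx nPx Ky nPy HV.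
  assert (Hp : exists p tau, P p /\ 0 < tau < 1 /\ forall j, p j = (1 - tau) * x j + tau * y j).
  { apply NNPP; intro Hn. apply (HV x). split.
    - split; auto. split; auto. intros u Hu HPu. destruct (seg_pt _ _ _ Hu) as [t [_ Ht]].
      apply nPx. replace x with u; auto. apply pt_eq; intros j; rewrite Ht; ring.
    - split; auto. split; auto. intros u Hu HPu. destruct (seg_pt _ _ _ Hu) as [t [Ht Hut]].
      destruct (Req_dec t 0) as [->|Ht0].
      + apply nPx. replace x with u; auto. apply pt_eq; intros j; rewrite Hut; ring.
      + destruct (Req_dec t 1) as [->|Ht1].
        * apply nPy. replace y with u; auto. apply pt_eq; intros j; rewrite Hut; ring.
        * apply Hn. exists u, t. split; auto. split; auto. lra. }
  destruct Hp as [p [tau [Hp [Htau Hpj]]]].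
  assert (Ex := Sx_conv P x p HP Hp). assert (Ey := Sx_conv P y p HP Hp).
  assert (H1 : forall z, setI (conv (setU P (set1 x))) (conv (setU P (set1 y))) z <-> P z).
  { intros z; split.
    - intros [Hx Hy]. apply NNPP; intro Hnz. apply (HV z). rewrite Ex in Hx; rewrite Ey in Hy.
      split; apply Sx_vis; auto.
    - intros Hz; split; apply conv_incl; left; auto. }
  assert (H2 : forall z, setU (conv (setU P (set1 x))) (conv (setU P (set1 y))) z <->
             conv (setU P (setU (set1 x) (set1 y))) z).
  { intros z; split.
    - intros [Hz|Hz]; (eapply conv_mono; [|exact Hz]); intros w [Hw|Hw];
        [left; auto|right; left; auto|left; auto|right; right; auto].
    - intros Hz. unfold setU at 1. rewrite Ex, Ey.
      apply Hz; [apply (union_convex P x y p tau); auto|].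
      intros w [Hw|[Hw|Hw]].
      + left. exists w, 0. split; [auto|split; [lra|]]. intros; ring.
      + left. exists p, 1. split; [auto|split; [lra|]]. intros; rewrite Hw; ring.
      + right. exists p, 1. split; [auto|split; [lra|]]. intros; rewrite Hw; ring. }
  split; [exact H1|split; [exact H2|]].
  intros psi Hpsi.
  assert (HsubX : forall u, conv (setU P (set1 x)) u -> K u).
  { intros u Hu. rewrite Ex in Hu. exact (Sx_sub P K x HK HPK Kx u Hu). }
  assert (HsubY : forall u, conv (setU P (set1 y)) u -> K u).
  { intros u Hu. rewrite Ey in Hu. exact (Sx_sub P K y HK HPK Ky u Hu). }
  assert (CX : convex_body (conv (setU P (set1 x)))).
  { split; [split|apply conv_convex].
    - apply (closed_ext (Sx P x)); [intros u; rewrite Ex; tauto|].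
      apply (Sx_closed P x p); auto.
    - apply (bounded_sub _ K); auto. }
  assert (CY : convex_body (conv (setU P (set1 y)))).
  { split; [split|apply conv_convex].
    - apply (closed_ext (Sx P y)); [intros u; rewrite Ey; tauto|].
      apply (Sx_closed P y p); auto.
    - apply (bounded_sub _ K); auto. }
  assert (CU : convex_body (setU (conv (setU P (set1 x))) (conv (setU P (set1 y))))).
  { split; [split|].
    - apply closed_union; [apply CX|apply CY].
    - apply (bounded_sub _ K); auto. intros u [Hu|Hu]; auto.
    - rewrite (set_ext _ _ H2). apply conv_convex. }
  pose proof (Hpsi _ _ CX CY CU) as Hv.
  rewrite (set_ext _ _ H2), (set_ext _ _ H1) in Hv. lra.
Qed.
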